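(* Let $IS\in\{\Box,\blacksquare\}$ and let $\tau$ be a correct compositional translation from $\mathrm{SYNCSIMPLE}$ into $\mathrm{LOCKSIMPLE}_{1,IS}$. Then each of the words $\tau(!)$ and $\tau(?)$ either starts with $P_1$ or contains the factor $P_1P_1$ (two consecutive occurrences of $P_1$).
   Context: $\mathrm{SYNCSIMPLE}$: subprocesses $\mathcal{U} ::= \checkmark \mid 0 \mid\, !\mathcal{U} \mid\, ?\mathcal{U}$; processes are finite parallel compositions ($\mid$ associative, commutative, $0$ a unit). Reduction: $!\mathcal{U}_1\mid ?\mathcal{U}_2\mid \mathcal{P}\to \mathcal{U}_1\mid\mathcal{U}_2\mid\mathcal{P}$. Successful: of form $\checkmark\mid\mathcal{P}$; may-convergent: reduces to a successful process; must-convergent: every reachable process is may-convergent. $\mathrm{LOCKSIMPLE}_{k,IS}$ ($IS\in\{\Box,\blacksquare\}^k$, $\Box$ empty, $\blacksquare$ full): subprocesses are words over $\{P_1,T_1,\dots,P_k,T_k\}$ followed by $0$ or $\checkmark$; states $(\mathcal{P},C)$ reduce by $(P_i\mathcal{U}\mid\mathcal{P},C)\to(\mathcal{U}\mid\mathcal{P},C[C_i:=\blacksquare])$ only if $C_i=\Box$, and $(T_i\mathcal{U}\mid\mathcal{P},C)\to(\mathcal{U}\mid\mathcal{P},C[C_i:=\Box])$ always. Success = process contains $\checkmark$; a process $\mathcal{P}$ is may/must-convergent iff the state $(\mathcal{P},IS)$ is. A compositional translation $\tau$ is given by words $\tau(!),\tau(?)$ with $\tau(0)=0$, $\tau(\checkmark)=\checkmark$,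 $\tau(!\mathcal{U})=\tau(!)\tau(\mathcal{U})$, $\tau(?\mathcal{U})=\tau(?)\tau(\mathcal{U})$, $\tau$ commuting with $\mid$; correct = preserves and reflects may- and must-convergence. *)

(* Defs.v *)
From mathcomp Require Import all_boot.
From Stdlib Require Import Permutation Relations.
Set Implicit Arguments. Unset Strict Implicit. Unset Printing Implicit Defensive.

Inductive ssub : Type :=
  | SCheck : ssub
  | SZero : ssub
  | SSend : ssub -> ssub
  | SRecv : ssub -> ssub.

(* A process is a finite parallel composition, represented as a list of
   subprocesses; | is associative/commutative (steps are taken up to
   permutation), and the empty list is 0. *)
Definition sproc := seq ssub.

Definition sstep (P P' : sproc) : Prop :=
  exists U1 U2 rest,
    Permutation P (SSend U1 :: SRecv U2 :: rest) /\ P' = U1 :: U2 :: rest.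

Definition sreach := clos_refl_trans sproc sstep.

Definition ssuccessful (P : sproc) : Prop := List.In SCheck P.

Definition smay (P : sproc) : Prop := exists P', sreach P P' /\ ssuccessful P'.
Definition smust (P : sproc) : Prop := forall P', sreach P P' -> smay P'.

Inductive lact (k : nat) : Type :=
  | LP : 'I_k -> lact k
  | LT : 'I_k -> lact k.

(* a subprocess: a word over {P_i,T_i} followed by 0 (false) or check (true) *)
Definition lsub (k : nat) := (seq (lact k) * bool)%type.
Definition lproc (k : nat) := seq (lsub k).
(* lock store: true = full (black square), false = empty (white square) *)
Definition lstore (k : nat) := {ffun 'I_k -> bool}.
Definition lstate (k : nat) := (lproc k * lstore k)%type.

Definition setlock k (C : lstore k) (i : 'I_k) (b : bool) : lstore k :=
  [ffun j => if j == i then b else C j].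

Definition lstep k (S S' : lstate k) : Prop :=
  exists a w b rest,
    Permutation S.1 ((a :: w, b) :: rest) /\ S'.1 = (w, b) :: rest /\
    match a with
    | LP i => S.2 i = false /\ S'.2 = setlock S.2 i true
    | LT i => S'.2 = setlock S.2 i false
    end.

Definition lreach k := clos_refl_trans (lstate k) (@lstep k).

Definition lsuccessful k (S : lstate k) : Prop := List.In ([::], true) S.1.

Definition lmay k (S : lstate k) : Prop := exists S', lreach S S' /\ lsuccessful S'.
Definition lmust k (S : lstate k) : Prop := forall S', lreach S S' -> lmay S'.

Fixpoint tr_sub k (wS wR : seq (lact k)) (U : ssub) : lsub k :=
  match U with
  | SCheck => ([::], true)
  | SZero => ([::], false)
  | SSend U' => let: (w, b) := tr_sub wS wR U' in (wS ++ w, b)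
  | SRecv U' => let: (w, b) := tr_sub wS wR U' in (wR ++ w, b)
  end.

Definition tr_proc k (wS wR : seq (lact k)) (P : sproc) : lproc k :=
  map (tr_sub wS wR) P.

Definition correct_translation k (IS : lstore k) (wS wR : seq (lact k)) : Prop :=
  forall P : sproc,
    (smay P <-> lmay (tr_proc wS wR P, IS)) /\
    (smust P <-> lmust (tr_proc wS wR P, IS)).

Definition starts_P_or_PP k (i : 'I_k) (w : seq (lact k)) : Prop :=
  (exists v, w = LP i :: v) \/ (exists u v, w = u ++ LP i :: LP i :: v).

(* Main.v *)
Require Import Defs.
From Stdlib Require Import Permutation Relations Classical.
From mathcomp Require Import all_boot.

Definition noPP (w : seq (lact 1)) : Prop :=
  ~ (exists u v, w = u ++ LP ord0 :: LP ord0 :: v).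

Fixpoint ok (c : bool) (w : seq (lact 1)) : Prop :=
  match w with
  | [::] => True
  | LT _ :: w' => ok false w'
  | LP _ :: w' => c = false /\ ok true w'
  end.

Lemma ok_of (w : seq (lact 1)) : forall c, noPP w ->
  (c = false \/ ~ (exists v, w = LP ord0 :: v)) -> ok c w.
Proof.
elim: w => [|a w IH] c Hn Hc //=.
have Hn' : noPP w.
  by move=> [u [v Hu]]; apply: Hn; exists (a :: u), v; rewrite Hu.
case: a Hn Hc => i Hn Hc.
- split.
    by case: Hc => // H; exfalso; apply: H; exists w; rewrite (ord1 i).
  apply: IH => //; right => -[v Hv]; apply: Hn; exists [::], v.
  by rewrite Hv (ord1 i).
- by apply: IH => //; left.
Qed.

Lemma run (w : seq (lact 1)) : forall (C : lstore 1) b, ok (C ord0) w ->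
  exists C', lreach ([:: (w, b)], C) ([:: ([::], b)], C').
Proof.
elim: w => [|a w IH] C b /=.
  by move=> _; exists C; apply: rt_refl.
case: a => i.
- move=> [H1 H2].
  have Hs : ok (setlock C i true ord0) w by rewrite /setlock ffunE (ord1 i) eqxx.
  have [C' HC'] := IH (setlock C i true) b Hs.
  exists C'; apply: rt_trans HC'; apply: rt_step.
  exists (LP i), w, b, [::]; split => //=; split => //.
  by rewrite (ord1 i).
- move=> H2.
  have Hs : ok (setlock C i false ord0) w by rewrite /setlock ffunE (ord1 i) eqxx.
  have [C' HC'] := IH (setlock C i false) b Hs.
  exists C'; apply: rt_trans HC'; apply: rt_step.
  by exists (LT i), w, b, [::].
Qed.

Lemma single_stuck (U : ssub) P' : sreach [:: U] P' -> P' = [:: U].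
Proof.
have H : forall P Q, sreach P Q -> P = [:: U] -> Q = [:: U].
  move=> P Q; elim => //.
  - move=> x y [U1 [U2 [rest [Hp _]]]] Hx; subst x.
    by have := Permutation_length Hp.
  - by move=> x y z _ IH1 _ IH2 Hx; apply: IH2; apply: IH1.
by move=> Hr; apply: (H _ _ Hr).
Qed.

Lemma not_may (U : ssub) : U <> SCheck -> ~ smay [:: U].
Proof.
move=> HU [P' [Hr Hs]]; rewrite (@single_stuck U _ Hr) in Hs.
by case: Hs => // H; apply: HU.
Qed.

Lemma key (IS : {ffun 'I_1 -> bool}) (w : seq (lact 1)) U :
  U <> SCheck ->
  (smay [:: U] <-> lmay ([:: (w, true)], IS)) ->
  starts_P_or_PP ord0 w.
Proof.
move=> HU [_ H2].
apply: NNPP => Hn.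
have Hok : ok (IS ord0) w.
  apply: ok_of.
    by move=> HH; apply: Hn; right.
  by right => HH; apply: Hn; left.
have [C' HC'] := @run w IS true Hok.
apply: (@not_may U HU); apply: H2.
by exists ([:: ([::], true)], C'); split => //=; left.
Qed.

Theorem lemma3p1 (IS : {ffun 'I_1 -> bool}) (wS wR : seq (lact 1)) :
  correct_translation IS wS wR ->
  starts_P_or_PP ord0 wS /\ starts_P_or_PP ord0 wR.
Proof.
move=> Hc; split.
- apply: (@key IS wS (SSend SCheck)) => //.
  have [H _] := Hc [:: SSend SCheck].
  by move: H; rewrite /tr_proc /= cats0.
- apply: (@key IS wR (SRecv SCheck)) => //.
  have [H _] := Hc [:: SRecv SCheck].
  by move: H; rewrite /tr_proc /= cats0.
Qed.
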